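(* Let $\mathbf v\in\mathbb R^{n\times m}_{<0}$, $\mathbf b\in\mathbb R^n_{<0}$, and let $\mathbf z$ be an allocation. The following are equivalent: (1) $\mathbf z$ is competitive for $(\mathbf v,\mathbf b)$; (2) $\mathbf u(\mathbf z)\in\mathbb R^n_{<0}$ and $z_{i,j}>0$ implies $\frac{v_{i,j}b_i}{u_i(\mathbf z_i)}\ge\frac{v_{i',j}b_{i'}}{u_{i'}(\mathbf z_{i'})}$ for all $i'\in[n]$; (3) $\mathbf u(\mathbf z)\in\mathbb R^n_{<0}$ and $\mathbf y=\mathbf z$ maximizes $W_\tau(\mathbf y)=\sum_i\tau_iu_i(\mathbf y_i)$ over all allocations $\mathbf y$, where $\tau_i=b_i/u_i(\mathbf z_i)$; (4) $\mathbf u(\mathbf z)\in\mathbb R^n_{<0}$, $\mathbf u(\mathbf z)$ lies on the Pareto frontier $\mathcal U^*(\mathbf v)$, and $\mathbf u(\mathbf z)$ is a critical point of the Nash product $\mathcal N_{\mathbf b}(\mathbf u)=\prod_i|u_i|^{|b_i|}$ on $\mathcal U(\mathbf v)$.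
   Context: Agents $[n]$, chores $[m]$, allocations $\mathbf z\in\mathbb R^{n\times m}_{\ge0}$ with column sums $1$; $u_i(\mathbf z_i)=\sum_jv_{i,j}z_{i,j}$, $\mathbf u(\mathbf z)=(u_i(\mathbf z_i))_i$; $\mathcal U(\mathbf v)=\{\mathbf u(\mathbf z):\mathbf z\text{ allocation}\}$ and $\mathcal U^*(\mathbf v)$ the set of utility profiles of Pareto optimal allocations. $\mathbf z$ is competitive for $(\mathbf v,\mathbf b)$ if there exist prices $\mathbf p\in\mathbb R^m_{<0}$ such that each $\mathbf z_i$ maximizes $u_i$ over bundles $\mathbf x\in\mathbb R^m_{\ge0}$ with $\sum_jp_jx_j\le b_i$. A point $\mathbf u\in\mathcal U(\mathbf v)\cap\mathbb R^n_{<0}$ is a critical point of a smooth function $f$ on the convex set $\mathcal U(\mathbf v)$ if the tangent hyperplane at $\mathbf u$ to the level set of $f$ through $\mathbf u$ is a supporting hyperplane of $\mathcal U(\mathbf v)$. *)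

(* Defs.v *)
From Stdlib Require Import Reals Lra Lia Arith.
Open Scope R_scope.

(* Vectors/matrices are functions on nat; only indices i < n, j < m matter. *)

Fixpoint sumR (n : nat) (f : nat -> R) : R :=
  match n with
  | O => 0
  | S k => sumR k f + f k
  end.

Fixpoint prodR (n : nat) (f : nat -> R) : R :=
  match n with
  | O => 1
  | S k => prodR k f * f k
  end.

(* z : agent -> chore -> share is an allocation of m chores among n agents *)
Definition allocation (n m : nat) (z : nat -> nat -> R) : Prop :=
  (forall i j, (i < n)%nat -> (j < m)%nat -> 0 <= z i j) /\
  (forall j, (j < m)%nat -> sumR n (fun i => z i j) = 1).

Definition util (m : nat) (v : nat -> nat -> R) (i : nat) (x : nat -> R) : R :=
  sumR m (fun j => v i j * x j).

Definition uprof (m : nat) (v : nat -> nat -> R) (z : nat -> nat -> R) : nat -> R :=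
  fun i => util m v i (z i).

(* U(v): utility profiles of allocations (compared on the first n coordinates) *)
Definition Uset (n m : nat) (v : nat -> nat -> R) (w : nat -> R) : Prop :=
  exists y, allocation n m y /\ forall i, (i < n)%nat -> w i = uprof m v y i.

Definition pareto_optimal (n m : nat) (v : nat -> nat -> R) (z : nat -> nat -> R) : Prop :=
  allocation n m z /\
  ~ (exists y, allocation n m y /\
       (forall i, (i < n)%nat -> uprof m v z i <= uprof m v y i) /\
       (exists i, (i < n)%nat /\ uprof m v z i < uprof m v y i)).

Definition Ustar (n m : nat) (v : nat -> nat -> R) (w : nat -> R) : Prop :=
  exists y, pareto_optimal n m v y /\ forall i, (i < n)%nat -> w i = uprof m v y i.

Definition in_budget (m : nat) (p : nat -> R) (bi : R) (x : nat -> R) : Prop :=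
  (forall j, (j < m)%nat -> 0 <= x j) /\ sumR m (fun j => p j * x j) <= bi.

Definition competitive (n m : nat) (v : nat -> nat -> R) (b : nat -> R)
    (z : nat -> nat -> R) : Prop :=
  exists p : nat -> R,
    (forall j, (j < m)%nat -> p j < 0) /\
    forall i, (i < n)%nat ->
      in_budget m p (b i) (z i) /\
      forall x, in_budget m p (b i) x -> util m v i x <= util m v i (z i).

Definition upd (u : nat -> R) (i : nat) (t : R) : nat -> R :=
  fun k => if Nat.eqb k i then t else u k.

Definition nash (n : nat) (b : nat -> R) (u : nat -> R) : R :=
  prodR n (fun i => Rpower (Rabs (u i)) (Rabs (b i))).

(* u in S ∩ R^n_{<0} is a critical point of f on S: the tangent hyperplane
   {x | grad f(u) . (x - u) = 0} at u of the level set of f through u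
   (grad f(u) given by partial derivatives, and nonzero so the tangent
   hyperplane is defined) is a supporting hyperplane of S. *)
Definition critical_point (n : nat) (f : (nat -> R) -> R) (S : (nat -> R) -> Prop)
    (u : nat -> R) : Prop :=
  S u /\ (forall i, (i < n)%nat -> u i < 0) /\
  exists g : nat -> R,
    (forall i, (i < n)%nat -> derivable_pt_lim (fun t => f (upd u i t)) (u i) (g i)) /\
    (exists i, (i < n)%nat /\ g i <> 0) /\
    ((forall w, S w -> sumR n (fun i => g i * (w i - u i)) <= 0) \/
     (forall w, S w -> sumR n (fun i => g i * (w i - u i)) >= 0)).

(* Main.v *)
Require Import Defs.
From Stdlib Require Import Reals Lra Lia Arith FunctionalExtensionality.
Open Scope R_scope.

Definition indR (a k : nat) : R := if Nat.eqb a k then 1 else 0.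

Lemma sumR_ext n f g : (forall k, (k < n)%nat -> f k = g k) -> sumR n f = sumR n g.
Proof.
  induction n; simpl; intros H; auto.
  rewrite IHn by (intros; apply H; lia). rewrite H by lia. reflexivity.
Qed.

Lemma sumR_plus n f g : sumR n (fun k => f k + g k) = sumR n f + sumR n g.
Proof. induction n; simpl; [ring|rewrite IHn; ring]. Qed.

Lemma sumR_scal n c f : sumR n (fun k => c * f k) = c * sumR n f.
Proof. induction n; simpl; [ring|rewrite IHn; ring]. Qed.

Lemma sumR_le n f g : (forall k, (k < n)%nat -> f k <= g k) -> sumR n f <= sumR n g.
Proof.
  induction n; simpl; intros H; [lra|].
  assert (sumR n f <= sumR n g) by (apply IHn; intros; apply H; lia).
  assert (f n <= g n) by (apply H; lia). lra.
Qed.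

Lemma sumR_lt n f g : (forall k, (k < n)%nat -> f k <= g k) ->
  (exists k, (k < n)%nat /\ f k < g k) -> sumR n f < sumR n g.
Proof.
  induction n; simpl; intros H [k [Hk Hlt]]; [lia|].
  destruct (Nat.eq_dec k n).
  - subst. assert (sumR n f <= sumR n g) by (apply sumR_le; intros; apply H; lia). lra.
  - assert (sumR n f < sumR n g) by (apply IHn; [intros; apply H; lia| exists k; split; [lia|auto]]).
    assert (f n <= g n) by (apply H; lia). lra.
Qed.

Lemma sumR_eq_each n f g : (forall k, (k < n)%nat -> f k <= g k) -> sumR n g <= sumR n f ->
  forall k, (k < n)%nat -> f k = g k.
Proof.
  intros H1 H2 k Hk. destruct (Rle_lt_or_eq_dec _ _ (H1 k Hk)); auto.
  exfalso. assert (sumR n f < sumR n g) by (apply sumR_lt; eauto). lra.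
Qed.

Lemma sumR_neg_exists n f : sumR n f < 0 -> exists k, (k < n)%nat /\ f k < 0.
Proof.
  induction n; simpl; intros H; [lra|].
  destruct (Rlt_or_le (sumR n f) 0).
  - destruct (IHn H0) as [k [? ?]]. exists k; split; auto; lia.
  - exists n; split; [lia|lra].
Qed.

Lemma sumR_ind n f k : (k < n)%nat -> sumR n (fun a => f a * indR a k) = f k.
Proof.
  induction n; simpl; intros Hk; [lia|]. unfold indR at 2.
  destruct (Nat.eqb_spec n k).
  - subst. rewrite (sumR_ext _ _ (fun _ => 0)). 
    + clear. assert (sumR k (fun _ => 0) = 0) by (induction k; simpl; [lra| rewrite IHk; lra]). lra.
    + intros a Ha. unfold indR. destruct (Nat.eqb_spec a k); [lia|ring].
  - rewrite IHn by lia. ring.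
Qed.

Lemma sum3 n F G H k i : (k < n)%nat -> (i < n)%nat ->
  sumR n (fun a => F a + G a * indR a k + H a * indR a i) = sumR n F + G k + H i.
Proof.
  intros. rewrite !sumR_plus, !sumR_ind by auto. ring.
Qed.

Lemma sumR_exch n m F : sumR n (fun i => sumR m (fun j => F i j)) = sumR m (fun j => sumR n (fun i => F i j)).
Proof.
  induction n; simpl.
  - induction m; simpl; [auto| rewrite <- IHm; ring].
  - rewrite IHn. rewrite (sumR_plus m (fun j => sumR n (fun i => F i j)) (fun j => F n j)). reflexivity.
Qed.

Lemma prodR_ext n f g : (forall k, (k < n)%nat -> f k = g k) -> prodR n f = prodR n g.
Proof.
  induction n; simpl; intros H; auto.
  rewrite IHn by (intros; apply H; lia). rewrite H by lia. reflexivity.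
Qed.

Lemma prodR_pos n f : (forall k, (k < n)%nat -> 0 < f k) -> 0 < prodR n f.
Proof.
  induction n; simpl; intros H; [lra|].
  apply Rmult_lt_0_compat; [apply IHn; intros; apply H; lia| apply H; lia].
Qed.

Lemma prodR_factor n F k : (k < n)%nat ->
  prodR n F = prodR n (fun a => if Nat.eqb a k then 1 else F a) * F k.
Proof.
  induction n; simpl; intros Hk; [lia|].
  destruct (Nat.eqb_spec n k).
  - subst. rewrite (prodR_ext k (fun a => if Nat.eqb a k then 1 else F a) F); [ring|].
    intros a Ha. destruct (Nat.eqb_spec a k); [lia|auto].
  - rewrite IHn by lia. ring.
Qed.

Lemma Rpower_pos x y : 0 < Rpower x y.
Proof. unfold Rpower. apply exp_pos. Qed.

Definition tr (z : nat -> nat -> R) i k j l e d : nat -> nat -> R :=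
  fun a c => z a c + e*(indR a k - indR a i)*indR c j + d*(indR a i - indR a k)*indR c l.

Lemma transfer n m v z i k j l e d :
  allocation n m z -> (i < n)%nat -> (k < n)%nat -> (j < m)%nat -> (l < m)%nat -> i <> k ->
  (j <> l \/ d = 0) -> 0 <= e <= z i j -> 0 <= d <= z k l ->
  allocation n m (tr z i k j l e d) /\
  forall a, uprof m v (tr z i k j l e d) a =
    uprof m v z a + e*(indR a k - indR a i)*v a j + d*(indR a i - indR a k)*v a l.
Proof.
  intros [Hnn Hs] Hi Hk Hj Hl Hik Hjl He Hd. split; [split|].
  - intros a c Ha Hc. unfold tr, indR.
    destruct (Nat.eqb_spec a k); destruct (Nat.eqb_spec a i); destruct (Nat.eqb_spec c j);
      destruct (Nat.eqb_spec c l); subst; try lia;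
      try (destruct Hjl as [Hjl|Hjl]; [lia|subst]);
      specialize (Hnn _ _ Ha Hc); lra.
  - intros c Hc. unfold tr.
    rewrite (sumR_ext _ _ (fun a => z a c + (e*indR c j - d*indR c l) * indR a k
                                    + (d*indR c l - e*indR c j) * indR a i)) by (intros; ring).
    rewrite sum3 by auto. rewrite Hs by auto. ring.
  - intros a. unfold uprof, util, tr.
    rewrite (sumR_ext _ _ (fun c => v a c * z a c + (e*(indR a k - indR a i)*v a c) * indR c j
                                    + (d*(indR a i - indR a k) * v a c) * indR c l)) by (intros; ring).
    rewrite sum3 by auto. ring.
Qed.

Definition Wt n m v (tau : nat -> R) y := sumR n (fun a => tau a * uprof m v y a).

Lemma W_transfer n m v z tau i k j l e d :
  allocation n m z -> (i < n)%nat -> (k < n)%nat -> (j < m)%nat -> (l < m)%nat -> i <> k ->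
  (j <> l \/ d = 0) -> 0 <= e <= z i j -> 0 <= d <= z k l ->
  Wt n m v tau (tr z i k j l e d) =
   Wt n m v tau z + e*(tau k * v k j - tau i * v i j) + d*(tau i * v i l - tau k * v k l).
Proof.
  intros. destruct (transfer n m v z i k j l e d) as [_ Hu]; auto.
  unfold Wt. rewrite (sumR_ext _ _ (fun a => tau a * uprof m v z a
     + (e*tau a * v a j - d * tau a * v a l) * indR a k
     + (d*tau a*v a l - e*tau a*v a j)*indR a i)).
  - rewrite sum3 by auto. ring.
  - intros a _. rewrite Hu. ring.
Qed.

Lemma c1_neg n m v b z :
  (forall i j, (i < n)%nat -> (j < m)%nat -> v i j < 0) ->
  (forall i, (i < n)%nat -> b i < 0) -> allocation n m z ->
  competitive n m v b z -> forall i, (i < n)%nat -> uprof m v z i < 0.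
Proof.
  intros Hv Hb [Hnn Hs] [p [Hp Hc]] i Hi.
  destruct (Hc i Hi) as [[_ Hbud] _].
  assert (Hlt: sumR m (fun j => p j * z i j) < 0) by (specialize (Hb i Hi); lra).
  destruct (sumR_neg_exists _ _ Hlt) as [j [Hj Hpj]].
  assert (0 < z i j).
  { specialize (Hnn i j Hi Hj). specialize (Hp j Hj). destruct (Rle_lt_or_eq_dec _ _ Hnn); auto.
    rewrite <- e in Hpj. lra. }
  unfold uprof, util. replace 0 with (sumR m (fun _ => 0)).
  - apply sumR_lt.
    + intros c Hc'. specialize (Hv i c Hi Hc'). specialize (Hnn i c Hi Hc'). nra.
    + exists j. split; auto. specialize (Hv i j Hi Hj). nra.
  - clear. induction m; simpl; [auto|rewrite IHm; ring].
Qed.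

Lemma c1_c2 n m v b z :
  (forall i j, (i < n)%nat -> (j < m)%nat -> v i j < 0) ->
  (forall i, (i < n)%nat -> b i < 0) -> allocation n m z ->
  competitive n m v b z ->
  forall i j, (i < n)%nat -> (j < m)%nat -> z i j > 0 ->
       forall i', (i' < n)%nat ->
         v i j * b i / uprof m v z i >= v i' j * b i' / uprof m v z i'.
Proof.
  intros Hv Hb Hz Hc.
  pose proof (c1_neg n m v b z Hv Hb Hz Hc) as Hneg.
  destruct Hz as [Hnn Hs]. destruct Hc as [p [Hp Hc]].
  assert (K: forall i j, (i < n)%nat -> (j < m)%nat -> v i j * (b i / uprof m v z i) <= p j).
  { intros i j Hi Hj.
    destruct (Hc i Hi) as [_ Hmax].
    set (x := fun c => (b i / p j) * indR c j).
    assert (Hx: in_budget m p (b i) x).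
    { split.
      - intros c Hc'. unfold x, indR. destruct (Nat.eqb c j).
        + specialize (Hb i Hi); specialize (Hp j Hj).
          assert (0 < b i / p j) by (apply Rdiv_neg_neg; auto). lra.
        + lra.
      - unfold x. rewrite (sumR_ext _ _ (fun c => (p c * (b i / p j)) * indR c j)) by (intros; ring).
        rewrite sumR_ind by auto. specialize (Hp j Hj). right. field. lra. }
    specialize (Hmax x Hx). unfold util, x in Hmax.
    rewrite (sumR_ext _ _ (fun c => (v i c * (b i / p j)) * indR c j)) in Hmax by (intros; ring).
    rewrite sumR_ind in Hmax by auto. fold (util m v i (z i)) in Hmax. fold (uprof m v z i) in Hmax.
    specialize (Hneg i Hi). specialize (Hp j Hj). specialize (Hb i Hi). specialize (Hv i j Hi Hj).
    set (U := uprof m v z i) in *.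
    assert (H1: U * p j <= v i j * b i).
    { apply (Rmult_le_compat_r (- p j)) in Hmax; [|lra].
      replace (v i j * (b i / p j) * - p j) with (- (v i j * b i)) in Hmax by (field; lra). lra. }
    unfold Rdiv. apply (Rmult_le_reg_r (- U)); [lra|].
    replace (v i j * (b i * / U) * - U) with (- (v i j * b i)) by (field; lra). lra. }
  intros i j Hi Hj Hzij i' Hi'.
  destruct (Hc i Hi) as [[_ Hbud] _].
  assert (E: forall c, (c < m)%nat -> v i c * (b i / uprof m v z i) * z i c = p c * z i c).
  { apply sumR_eq_each.
    - intros c Hc'. specialize (K i c Hi Hc'). specialize (Hnn i c Hi Hc'). nra.
    - rewrite (sumR_ext m (fun c => v i c * (b i / uprof m v z i) * z i c) (fun c => (b i / uprof m v z i) * (v i c * z i c))) by (intros; ring).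
      rewrite sumR_scal. fold (util m v i (z i)). fold (uprof m v z i).
      specialize (Hneg i Hi). replace (b i / uprof m v z i * uprof m v z i) with (b i) by (field; lra).
      auto. }
  specialize (E j Hj). specialize (K i' j Hi' Hj).
  assert (v i j * (b i / uprof m v z i) = p j).
  { apply (Rmult_eq_reg_r (z i j)); auto; lra. }
  unfold Rdiv in *. lra.
Qed.

Fixpoint mxR (n : nat) (f : nat -> R) : R :=
  match n with O => f O | S k => Rmax (mxR k f) (f k) end.

Lemma mxR_ge n f k : (k < n)%nat -> f k <= mxR n f.
Proof.
  induction n; simpl; intros Hk; [lia|].
  destruct (Nat.eq_dec k n).
  - subst. apply Rmax_r.
  - eapply Rle_trans; [apply IHn; lia| apply Rmax_l].
Qed.

Lemma mxR_attained n f : (0 < n)%nat -> exists k, (k < n)%nat /\ mxR n f = f k.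
Proof.
  destruct n as [|n]; intros H; [lia|]. clear H.
  induction n.
  - exists O. split; [lia|]. simpl. apply Rmax_left. lra.
  - destruct IHn as [k [Hk E]]. change (mxR (S (S n)) f) with (Rmax (mxR (S n) f) (f (S n))).
    unfold Rmax. destruct (Rle_dec (mxR (S n) f) (f (S n))).
    + exists (S n). split; [lia|auto].
    + exists k. split; [lia|auto].
Qed.

Lemma c2_facts n m v b z :
  (0 < n)%nat ->
  (forall i j, (i < n)%nat -> (j < m)%nat -> v i j < 0) ->
  (forall i, (i < n)%nat -> b i < 0) -> allocation n m z ->
  (forall i, (i < n)%nat -> uprof m v z i < 0) ->
  (forall i j, (i < n)%nat -> (j < m)%nat -> z i j > 0 ->
       forall i', (i' < n)%nat ->
         v i j * b i / uprof m v z i >= v i' j * b i' / uprof m v z i') ->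
  exists p : nat -> R,
    (forall j, (j < m)%nat -> p j < 0) /\
    (forall i j, (i < n)%nat -> (j < m)%nat -> v i j * (b i / uprof m v z i) <= p j) /\
    (forall i j, (i < n)%nat -> (j < m)%nat ->
        v i j * (b i / uprof m v z i) * z i j = p j * z i j).
Proof.
  intros Hn Hv Hb [Hnn Hs] Hneg H2.
  set (f := fun j a => v a j * (b a / uprof m v z a)).
  exists (fun j => mxR n (f j)).
  assert (Hf: forall a j, (a < n)%nat -> (j < m)%nat -> f j a < 0).
  { intros a j Ha Hj. unfold f. specialize (Hv a j Ha Hj). specialize (Hb a Ha).
    specialize (Hneg a Ha). assert (0 < b a / uprof m v z a) by (apply Rdiv_neg_neg; auto). nra. }
  split; [|split].
  - intros j Hj. destruct (mxR_attained n (f j) Hn) as [k [Hk E]]. rewrite E. auto.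
  - intros i j Hi Hj. apply (mxR_ge n (f j) i Hi).
  - intros i j Hi Hj. specialize (Hnn i j Hi Hj). destruct (Rle_lt_or_eq_dec _ _ Hnn) as [Hp|Hp].
    + f_equal. destruct (mxR_attained n (f j) Hn) as [k [Hk E]]. rewrite E.
      apply Rle_antisym.
      * rewrite <- E. apply (mxR_ge n (f j) i Hi).
      * specialize (H2 i j Hi Hj Hp k Hk). unfold f. unfold Rdiv in *. rewrite <- !Rmult_assoc. lra.
    + rewrite <- Hp. ring.
Qed.

Lemma c2_c1 n m v b z (p : nat -> R) :
  (forall i, (i < n)%nat -> b i < 0) -> allocation n m z ->
  (forall i, (i < n)%nat -> uprof m v z i < 0) ->
  (forall j, (j < m)%nat -> p j < 0) ->
  (forall i j, (i < n)%nat -> (j < m)%nat -> v i j * (b i / uprof m v z i) <= p j) ->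
  (forall i j, (i < n)%nat -> (j < m)%nat ->
        v i j * (b i / uprof m v z i) * z i j = p j * z i j) ->
  competitive n m v b z.
Proof.
  intros Hb [Hnn Hs] Hneg Hp F1 F2. exists p. split; auto.
  intros i Hi.
  specialize (Hneg i Hi). specialize (Hb i Hi).
  set (t := b i / uprof m v z i).
  assert (Ht: 0 < t) by (apply Rdiv_neg_neg; auto).
  assert (Hbud: sumR m (fun j => p j * z i j) = b i).
  { rewrite (sumR_ext _ _ (fun j => t * (v i j * z i j))).
    - rewrite sumR_scal. fold (util m v i (z i)). fold (uprof m v z i). unfold t. field. lra.
    - intros j Hj. rewrite <- F2 by auto. unfold t. ring. }
  split; [split|].
  - intros j Hj. auto.
  - lra.
  - intros x [Hx Hxb]. fold (uprof m v z i).
    unfold util.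
    apply Rle_trans with (sumR m (fun j => / t * (p j * x j))).
    + apply sumR_le. intros j Hj. specialize (F1 i j Hi Hj). fold t in F1. specialize (Hx j Hj).
      assert (v i j <= / t * p j).
      { apply (Rmult_le_reg_l t); auto. replace (t * (/ t * p j)) with (p j) by (field; lra). lra. }
      nra.
    + rewrite sumR_scal. apply Rle_trans with (/ t * b i).
      * apply Rmult_le_compat_l; auto. left. apply Rinv_0_lt_compat; auto.
      * right. unfold t. field. lra.
Qed.

Lemma c2_c3 n m v b z (p : nat -> R) :
  allocation n m z ->
  (forall i j, (i < n)%nat -> (j < m)%nat -> v i j * (b i / uprof m v z i) <= p j) ->
  (forall i j, (i < n)%nat -> (j < m)%nat ->
        v i j * (b i / uprof m v z i) * z i j = p j * z i j) ->
  forall y, allocation n m y ->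
    Wt n m v (fun i => b i / uprof m v z i) y <= Wt n m v (fun i => b i / uprof m v z i) z.
Proof.
  intros [Hnn Hs] F1 F2 y [Hynn Hys].
  set (t := fun i => b i / uprof m v z i) in *.
  assert (E: forall w, Wt n m v t w = sumR m (fun j => sumR n (fun a => v a j * t a * w a j))).
  { intros w. unfold Wt, uprof, util. rewrite <- sumR_exch. apply sumR_ext. intros a _.
    rewrite <- sumR_scal. apply sumR_ext. intros; ring. }
  rewrite !E.
  apply Rle_trans with (sumR m (fun j => p j)).
  - apply sumR_le. intros j Hj. apply Rle_trans with (sumR n (fun a => p j * y a j)).
    + apply sumR_le. intros a Ha. specialize (F1 a j Ha Hj). specialize (Hynn a j Ha Hj).
      unfold t. nra.
    + rewrite sumR_scal, Hys by auto. lra.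
  - right. apply sumR_ext. intros j Hj.
    rewrite (sumR_ext _ _ (fun a => p j * z a j)).
    + rewrite sumR_scal, Hs by auto. ring.
    + intros a Ha. apply F2; auto.
Qed.

Lemma opt_cond n m v z tau s :
  allocation n m z ->
  (forall y, allocation n m y -> s * Wt n m v tau y <= s * Wt n m v tau z) ->
  forall i j k, (i < n)%nat -> (j < m)%nat -> (k < n)%nat -> z i j > 0 ->
    s * (tau k * v k j - tau i * v i j) <= 0.
Proof.
  intros Hz HW i j k Hi Hj Hk Hzij.
  destruct (Nat.eq_dec i k).
  - subst. replace (tau k * v k j - tau k * v k j) with 0 by ring. lra.
  - assert (Hw := W_transfer n m v z tau i k j j (z i j) 0 Hz Hi Hk Hj Hj n0 (or_intror eq_refl)).
    assert (Hkj: 0 <= z k j) by (destruct Hz as [Hnn _]; apply Hnn; auto).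
    destruct (transfer n m v z i k j j (z i j) 0) as [Ha _]; auto; try (split; lra).
    { specialize (HW _ Ha). rewrite Hw in HW by (split; lra).
      assert (s * (z i j * (tau k * v k j - tau i * v i j)) <= 0) by nra.
      replace (s * (z i j * (tau k * v k j - tau i * v i j))) with
              (z i j * (s * (tau k * v k j - tau i * v i j))) in H by ring.
      nra. }
Qed.

Lemma conv_c2 n m v b z :
  (forall i j k, (i < n)%nat -> (j < m)%nat -> (k < n)%nat -> z i j > 0 ->
     (b k / uprof m v z k) * v k j - (b i / uprof m v z i) * v i j <= 0) ->
  (forall i j, (i < n)%nat -> (j < m)%nat -> z i j > 0 ->
       forall i', (i' < n)%nat ->
         v i j * b i / uprof m v z i >= v i' j * b i' / uprof m v z i').
Proof.
  intros H i j Hi Hj Hz i' Hi'. specialize (H i j i' Hi Hj Hi' Hz).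
  replace (v i j * b i / uprof m v z i) with (b i / uprof m v z i * v i j) by (unfold Rdiv; ring).
  replace (v i' j * b i' / uprof m v z i') with (b i' / uprof m v z i' * v i' j) by (unfold Rdiv; ring).
  lra.
Qed.

Lemma c3_PO n m v z tau :
  (forall i, (i < n)%nat -> 0 < tau i) ->
  allocation n m z ->
  (forall y, allocation n m y -> Wt n m v tau y <= Wt n m v tau z) ->
  pareto_optimal n m v z.
Proof.
  intros Ht Hz HW. split; auto. intros [y [Hy [Hle [a [Ha Hlt]]]]].
  specialize (HW y Hy). unfold Wt in HW.
  assert (sumR n (fun a => tau a * uprof m v z a) < sumR n (fun a => tau a * uprof m v y a)).
  { apply sumR_lt.
    - intros k Hk. apply Rmult_le_compat_l; [left; auto| auto].
    - exists a. split; auto. apply Rmult_lt_compat_l; auto. }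
  lra.
Qed.

Lemma swap_c2 n m v z tau :
  (forall i j, (i < n)%nat -> (j < m)%nat -> v i j < 0) ->
  (forall i, (i < n)%nat -> 0 < tau i) ->
  allocation n m z ->
  (forall i, (i < n)%nat -> uprof m v z i < 0) ->
  ~ (exists y, allocation n m y /\
       (forall i, (i < n)%nat -> uprof m v z i <= uprof m v y i) /\
       (exists i, (i < n)%nat /\ uprof m v z i < uprof m v y i)) ->
  (forall i j k, (i < n)%nat -> (j < m)%nat -> (k < n)%nat -> z i j > 0 ->
    tau i * v i j - tau k * v k j <= 0) ->
  (forall i j k, (i < n)%nat -> (j < m)%nat -> (k < n)%nat -> z i j > 0 ->
    tau k * v k j - tau i * v i j <= 0).
Proof.
  intros Hv Ht Hz Hneg NP Hmin i j k Hi Hj Hk Hzij.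
  destruct (Rle_or_lt (tau k * v k j - tau i * v i j) 0) as [|A]; auto. exfalso.
  destruct (Nat.eq_dec i k) as [e|nik]; [subst; lra|].
  assert (Huk := Hneg k Hk). unfold uprof, util in Huk.
  destruct (sumR_neg_exists _ _ Huk) as [l [Hl Hvz]].
  assert (Hzkl: 0 < z k l).
  { destruct Hz as [Hnn _]. specialize (Hnn k l Hk Hl). specialize (Hv k l Hk Hl). nra. }
  assert (B := Hmin k l i Hk Hl Hi Hzkl).
  destruct (Nat.eq_dec j l) as [e|njl]; [subst; lra|].
  pose proof (Hv i j Hi Hj) as vij. pose proof (Hv i l Hi Hl) as vil.
  pose proof (Hv k j Hk Hj) as vkj. pose proof (Hv k l Hk Hl) as vkl.
  pose proof (Ht i Hi) as ti. pose proof (Ht k Hk) as tk.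
  set (e := Rmin (z i j) (z k l * v i l / v i j)).
  assert (He0: 0 < e).
  { unfold e. apply Rmin_glb_lt; auto. apply Rdiv_neg_neg; nra. }
  assert (He1: e <= z i j) by apply Rmin_l.
  assert (He2: e <= z k l * v i l / v i j) by apply Rmin_r.
  set (d := e * v i j / v i l).
  assert (Hd0: 0 < d) by (unfold d; apply Rdiv_neg_neg; nra).
  assert (Hd1: d <= z k l).
  { unfold d. apply (Rmult_le_compat_r (v i j / v i l)) in He2; [|left; apply Rdiv_neg_neg; auto].
    replace (z k l * v i l / v i j * (v i j / v i l)) with (z k l) in He2 by (field; lra).
    replace (e * v i j / v i l) with (e * (v i j / v i l)) by (field; lra). lra. }
  destruct (transfer n m v z i k j l e d) as [Ha Hu]; auto; try lra.
  assert (Key: v k j * v i l < v k l * v i j).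
  { assert (A': tau i * v i j * v i l > tau k * v k j * v i l) by nra.
    assert (B': tau i * v i l * v i j <= tau k * v k l * v i j) by nra.
    assert (tau k * (v k j * v i l) < tau k * (v k l * v i j)) by nra.
    nra. }
  apply NP. exists (tr z i k j l e d). split; auto. split.
  - intros a Ha'. rewrite Hu. unfold indR.
    destruct (Nat.eqb_spec a k); destruct (Nat.eqb_spec a i); subst; try lia.
    +
      assert (d * v k l < e * v k j).
      { unfold d. replace (e * v i j / v i l * v k l) with (e * (v k l * v i j / v i l)) by (field; lra).
        apply Rmult_lt_compat_l; auto.
        apply (Rmult_lt_reg_r (- v i l)); [lra|].
        replace (v k l * v i j / v i l * - v i l) with (- (v k l * v i j)) by (field; lra). lra. }
      lra.
    +
      assert (d * v i l = e * v i j) by (unfold d; field; lra). lra.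
    + lra.
  - exists k. split; auto. rewrite Hu. unfold indR. rewrite Nat.eqb_refl.
    destruct (Nat.eqb_spec k i); [lia|].
    assert (d * v k l < e * v k j).
    { unfold d. replace (e * v i j / v i l * v k l) with (e * (v k l * v i j / v i l)) by (field; lra).
      apply Rmult_lt_compat_l; auto.
      apply (Rmult_lt_reg_r (- v i l)); [lra|].
      replace (v k l * v i j / v i l * - v i l) with (- (v k l * v i j)) by (field; lra). lra. }
    lra.
Qed.

Lemma nash_deriv n b u i : (i < n)%nat -> u i < 0 -> b i < 0 ->
  derivable_pt_lim (fun t => nash n b (upd u i t)) (u i) (- (nash n b u * (b i / u i))).
Proof.
  intros Hi Hu Hb.
  set (C := prodR n (fun a => if Nat.eqb a i then 1 else Rpower (Rabs (u a)) (Rabs (b a)))).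
  assert (E: forall t, nash n b (upd u i t) = C * Rpower (Rabs t) (Rabs (b i))).
  { intros t. unfold nash. rewrite (prodR_factor n _ i Hi). unfold upd at 2. rewrite Nat.eqb_refl.
    f_equal. apply prodR_ext. intros a Ha. unfold upd. destruct (Nat.eqb a i); auto. }
  assert (N: nash n b u = C * Rpower (Rabs (u i)) (Rabs (b i))).
  { unfold nash. rewrite (prodR_factor n _ i Hi). reflexivity. }
  replace (fun t => nash n b (upd u i t)) with
      (mult_real_fct C (comp (fun y => Rpower y (Rabs (b i))) Rabs)).
  2:{ apply functional_extensionality. intros t. unfold mult_real_fct, comp. rewrite E. reflexivity. }
  assert (Hx: 0 < Rabs (u i)) by (rewrite Rabs_left; lra).
  replace (- (nash n b u * (b i / u i))) with
     (C * (Rabs (b i) * Rpower (Rabs (u i)) (Rabs (b i) - 1) * -1)).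
  - apply derivable_pt_lim_scal. apply derivable_pt_lim_comp.
    + apply Rabs_derive_2; auto.
    + apply derivable_pt_lim_power; auto.
  - rewrite N. unfold Rminus. rewrite Rpower_plus, Rpower_Ropp, Rpower_1 by auto.
    rewrite (Rabs_left (u i)) by auto. rewrite (Rabs_left (b i)) by auto.
    field. lra.
Qed.

Lemma nash_pos n b u : 0 < nash n b u.
Proof. unfold nash. apply prodR_pos. intros. apply Rpower_pos. Qed.

Lemma sum_g n N t w u : sumR n (fun i => -(N * t i) * (w i - u i)) =
  -N * (sumR n (fun i => t i * w i) - sumR n (fun i => t i * u i)).
Proof. induction n; simpl; [ring| rewrite IHn; ring]. Qed.

Theorem proposition7 (n m : nat) (v : nat -> nat -> R) (b : nat -> R)
  (z : nat -> nat -> R)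
  (Hn : (0 < n)%nat)
  (Hv : forall i j, (i < n)%nat -> (j < m)%nat -> v i j < 0)
  (Hb : forall i, (i < n)%nat -> b i < 0)
  (Hz : allocation n m z) :
  let c1 := competitive n m v b z in
  let neg := forall i, (i < n)%nat -> uprof m v z i < 0 in
  let c2 := neg /\
    (forall i j, (i < n)%nat -> (j < m)%nat -> z i j > 0 ->
       forall i', (i' < n)%nat ->
         v i j * b i / uprof m v z i >= v i' j * b i' / uprof m v z i') in
  let tau := fun i => b i / uprof m v z i in
  let c3 := neg /\
    (forall y, allocation n m y ->
       sumR n (fun i => tau i * uprof m v y i) <= sumR n (fun i => tau i * uprof m v z i)) in
  let c4 := neg /\ Ustar n m v (uprof m v z) /\
    critical_point n (nash n b) (Uset n m v) (uprof m v z) in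
  (c1 <-> c2) /\ (c1 <-> c3) /\ (c1 <-> c4).
Proof.
  cbv zeta.
  set (t := fun i => b i / uprof m v z i).
  set (u := uprof m v z).
  assert (Htp: forall neg : (forall i, (i < n)%nat -> u i < 0), forall i, (i < n)%nat -> 0 < t i).
  { intros Hneg i Hi. unfold t. apply Rdiv_neg_neg; [apply Hb; auto|apply Hneg; auto]. }
  assert (L12: competitive n m v b z ->
     (forall i, (i < n)%nat -> u i < 0) /\
     (forall i j, (i < n)%nat -> (j < m)%nat -> z i j > 0 ->
       forall i', (i' < n)%nat -> v i j * b i / u i >= v i' j * b i' / u i')).
  { intros H. split; [apply (c1_neg n m v b z); auto| apply (c1_c2 n m v b z); auto]. }
  assert (L21: (forall i, (i < n)%nat -> u i < 0) ->
     (forall i j, (i < n)%nat -> (j < m)%nat -> z i j > 0 ->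
       forall i', (i' < n)%nat -> v i j * b i / u i >= v i' j * b i' / u i') ->
     exists p : nat -> R,
    (forall j, (j < m)%nat -> p j < 0) /\
    (forall i j, (i < n)%nat -> (j < m)%nat -> v i j * (b i / u i) <= p j) /\
    (forall i j, (i < n)%nat -> (j < m)%nat -> v i j * (b i / u i) * z i j = p j * z i j)).
  { intros. apply (c2_facts n m v b z); auto. }
  assert (L2W: (forall i, (i < n)%nat -> u i < 0) ->
     (forall i j, (i < n)%nat -> (j < m)%nat -> z i j > 0 ->
       forall i', (i' < n)%nat -> v i j * b i / u i >= v i' j * b i' / u i') ->
     forall y, allocation n m y -> Wt n m v t y <= Wt n m v t z).
  { intros Hneg H2. destruct (L21 Hneg H2) as [p [Hp [F1 F2]]].
    apply (c2_c3 n m v b z p); auto. }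
  assert (LW2: (forall y, allocation n m y -> Wt n m v t y <= Wt n m v t z) ->
     (forall i j, (i < n)%nat -> (j < m)%nat -> z i j > 0 ->
       forall i', (i' < n)%nat -> v i j * b i / u i >= v i' j * b i' / u i')).
  { intros HW. apply conv_c2. intros i j k Hi Hj Hk Hzij.
    assert (H := opt_cond n m v z t 1 Hz).
    change (t k * v k j - t i * v i j <= 0).
    replace (t k * v k j - t i * v i j) with (1 * (t k * v k j - t i * v i j)) by ring.
    apply H; auto. intros y Hy. rewrite !Rmult_1_l. auto. }
  assert (L2: competitive n m v b z <->
     (forall i, (i < n)%nat -> u i < 0) /\
     (forall i j, (i < n)%nat -> (j < m)%nat -> z i j > 0 ->
       forall i', (i' < n)%nat -> v i j * b i / u i >= v i' j * b i' / u i')).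
  { split; [auto|]. intros [Hneg H2]. destruct (L21 Hneg H2) as [p [Hp [F1 F2]]].
    apply (c2_c1 n m v b z p); auto. }
  assert (L3: competitive n m v b z <->
     (forall i, (i < n)%nat -> u i < 0) /\
     (forall y, allocation n m y -> Wt n m v t y <= Wt n m v t z)).
  { rewrite L2. split; intros [Hneg H]; split; auto. }
  split; [exact L2|]. split; [exact L3|].
  rewrite L3. split.
  - intros [Hneg HW]. split; [auto|]. split.
    + exists z. split; [|auto]. apply (c3_PO n m v z t); auto.
    + split; [exists z; split; auto|]. split; [auto|].
      exists (fun i => - (nash n b u * t i)). split; [|split].
      * intros i Hi. apply nash_deriv; auto.
      * exists O. split; auto. specialize (Htp Hneg O Hn). pose proof (nash_pos n b u). nra.
      * right. intros w [y [Hy Hw]]. rewrite sum_g.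
        rewrite (sumR_ext _ (fun i => t i * w i) (fun i => t i * uprof m v y i))
          by (intros; rewrite Hw; auto).
        specialize (HW y Hy). unfold Wt in HW. pose proof (nash_pos n b u). unfold u in *. nra.
  - intros [Hneg [[y0 [[Hy0a PO] Hy0]] [_ [_ [g [Hg [_ Halt]]]]]]]. split; [auto|].
    assert (Eg: forall i, (i < n)%nat -> g i = - (nash n b u * t i)).
    { intros i Hi. eapply uniqueness_limite; [apply Hg; auto| apply nash_deriv; auto]. }
    assert (Ew: forall w, Uset n m v w -> forall y, allocation n m y ->
       (forall i, (i < n)%nat -> w i = uprof m v y i) ->
       sumR n (fun i => g i * (w i - u i)) = - nash n b u * (Wt n m v t y - Wt n m v t z)).
    { intros w _ y _ Hw. rewrite (sumR_ext _ _ (fun i => -(nash n b u * t i) * (w i - u i))).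
      - rewrite sum_g. unfold Wt. f_equal. f_equal. apply sumR_ext. intros; rewrite Hw; auto.
      - intros i Hi. rewrite Eg; auto. }
    pose proof (nash_pos n b u) as HN.
    destruct Halt as [Hle|Hge].
    +
      assert (Hmin: forall y, allocation n m y -> -1 * Wt n m v t y <= -1 * Wt n m v t z).
      { intros y Hy. assert (HU: Uset n m v (uprof m v y)) by (exists y; auto).
        specialize (Hle _ HU). rewrite (Ew _ HU y Hy) in Hle by auto. nra. }
      assert (H2: forall i j, (i < n)%nat -> (j < m)%nat -> z i j > 0 ->
       forall i', (i' < n)%nat -> v i j * b i / u i >= v i' j * b i' / u i').
      { apply conv_c2. apply (swap_c2 n m v z t); auto.
        - intros [y [Hy [Hle' Hlt']]]. apply PO. exists y. split; auto. split.
          + intros i Hi. rewrite <- Hy0 by auto. apply Hle'; auto.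
          + destruct Hlt' as [i [Hi Hlt]]. exists i. split; auto. rewrite <- Hy0 by auto. auto.
        - intros i j k Hi Hj Hk Hzij.
          assert (H := opt_cond n m v z t (-1) Hz Hmin i j k Hi Hj Hk Hzij). lra. }
        change (forall i j, (i < n)%nat -> (j < m)%nat -> z i j > 0 ->
       forall i', (i' < n)%nat -> v i j * b i / u i >= v i' j * b i' / u i') in H2.
      apply L2W; auto.
    + intros y Hy. assert (HU: Uset n m v (uprof m v y)) by (exists y; auto).
      specialize (Hge _ HU). rewrite (Ew _ HU y Hy) in Hge by auto. nra.
Qed.
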